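(* Let $L$ be a C-lattice. The following are equivalent: (i) $L$ is sharp; (ii) $a=(a:(a:b))(a:b)$ for all $a,b\in L$; (iii) $(a:b)$ divides $a$ for all $a,b\in L$; (iv) $(a:b)$ divides $a$ whenever $a,b\in L$ satisfy $0<a<b<1$ and $a$ is not a prime element.
   Context: A multiplicative lattice is a complete lattice $(L,\le)$ with bottom $0$ and top $1$ which is also a commutative monoid with identity $1$ such that $a(\bigvee_\alpha b_\alpha)=\bigvee_\alpha(ab_\alpha)$ for all $a,b_\alpha\in L$. For $x,y\in L$, $(y:x)=\bigvee\{a\in L: ax\le y\}$. An element $c$ is compact if $c\le\bigvee S$ implies $c\le\bigvee T$ for some finite $T\subseteq S$. A C-lattice is a multiplicative lattice in which $1$ is compact, the product of two compact elements is compact, and every element is a join of compact elements. A proper element $p\neq 1$ is prime if $xy\le p$ implies $x\le p$ or $y\le p$. We say $a$ divides $b$ if $b=ac$ for some $c\in L$. $L$ is sharp if whenever $a_1a_2\le b$ with $a_1,a_2,b\in L$, there exist $b_1,b_2\in L$ with $a_i\le b_i$ ($i=1,2$) and $b=b_1b_2$. *)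

(* Defs.v *)
From Stdlib Require Import List.

Record mult_lattice := MultLattice {
  carrier :> Type;
  le : carrier -> carrier -> Prop;
  sup : (carrier -> Prop) -> carrier;
  mul : carrier -> carrier -> carrier;
  top : carrier;
  bot : carrier;
  le_refl : forall x, le x x;
  le_trans : forall x y z, le x y -> le y z -> le x z;
  le_antisym : forall x y, le x y -> le y x -> x = y;
  sup_ub : forall (S : carrier -> Prop) x, S x -> le x (sup S);
  sup_least : forall (S : carrier -> Prop) y,
      (forall x, S x -> le x y) -> le (sup S) y;
  bot_least : forall x, le bot x;
  top_greatest : forall x, le x top;
  mul_assoc : forall x y z, mul x (mul y z) = mul (mul x y) z;
  mul_comm : forall x y, mul x y = mul y x;
  mul_top_l : forall x, mul top x = x;
  mul_sup_distr : forall a (S : carrier -> Prop),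
      mul a (sup S) = sup (fun y => exists b, S b /\ y = mul a b)
}.

Arguments le {m} _ _.
Arguments sup {m} _.
Arguments mul {m} _ _.
Arguments top {m}.
Arguments bot {m}.

Section Defs.
Variable L : mult_lattice.

Definition lt (x y : L) : Prop := le x y /\ x <> y.

Definition colon (y x : L) : L := sup (fun a : L => le (mul a x) y).

Definition compact (c : L) : Prop :=
  forall S : L -> Prop, le c (sup S) ->
    exists T : list L, (forall t, In t T -> S t) /\ le c (sup (fun t => In t T)).

Definition C_lattice : Prop :=
  compact (@top L) /\
  (forall a b : L, compact a -> compact b -> compact (mul a b)) /\
  (forall x : L, x = sup (fun c => compact c /\ le c x)).

Definition prime_elt (p : L) : Prop :=
  p <> @top L /\ forall x y : L, le (mul x y) p -> le x p \/ le y p.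

Definition divides (a b : L) : Prop := exists c : L, b = mul a c.

Definition sharp : Prop :=
  forall a1 a2 b : L, le (mul a1 a2) b ->
    exists b1 b2 : L, le a1 b1 /\ le a2 b2 /\ b = mul b1 b2.

End Defs.

(* Main.v *)
Require Import Defs.
From Stdlib Require Import Classical.

Section H.
Variable L : mult_lattice.

Lemma sup_pair_eq (x y : L) : le x y -> sup (fun t => t = x \/ t = y) = y.
Proof.
  intro H. apply le_antisym.
  - apply sup_least. intros t [->| ->]; [exact H| apply le_refl].
  - apply sup_ub. auto.
Qed.

Lemma mul_mono_r (a x y : L) : le x y -> le (mul a x) (mul a y).
Proof.
  intro H. rewrite <- (sup_pair_eq x y H), mul_sup_distr.
  apply sup_ub. exists x. auto.
Qed.

Lemma mul_mono_l (a x y : L) : le x y -> le (mul x a) (mul y a).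
Proof. intro H. rewrite (mul_comm _ x), (mul_comm _ y). now apply mul_mono_r. Qed.

Lemma mul_bot (a : L) : mul a bot = bot.
Proof.
  assert (E : (bot : L) = sup (fun _ => False)).
  { apply le_antisym. apply bot_least. apply sup_least. tauto. }
  rewrite E, mul_sup_distr. rewrite <- E.
  apply le_antisym; [|apply bot_least].
  apply sup_least. intros x [b [[] _]].
Qed.

Lemma colon_ub (a b x : L) : le (mul x b) a -> le x (colon L a b).
Proof. intro H. unfold colon. apply sup_ub. exact H. Qed.

Lemma colon_mul (a b : L) : le (mul (colon L a b) b) a.
Proof.
  rewrite mul_comm. unfold colon. rewrite mul_sup_distr.
  apply sup_least. intros y [t [Ht ->]]. rewrite mul_comm. exact Ht.
Qed.

Lemma mul_le_l (a x : L) : le (mul x a) a.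
Proof. rewrite <- (mul_top_l _ a) at 2. apply mul_mono_l, top_greatest. Qed.

Lemma mul_le_r (a x : L) : le (mul a x) a.
Proof. rewrite mul_comm. apply mul_le_l. Qed.

End H.

Theorem proposition2p1 (L : mult_lattice) (HL : C_lattice L) :
  let cond_i := sharp L in
  let cond_ii := forall a b : L, a = mul (colon L a (colon L a b)) (colon L a b) in
  let cond_iii := forall a b : L, divides L (colon L a b) a in
  let cond_iv := forall a b : L,
      lt L bot a -> lt L a b -> lt L b top -> ~ prime_elt L a ->
      divides L (colon L a b) a in
  (cond_i <-> cond_ii) /\ (cond_i <-> cond_iii) /\ (cond_i <-> cond_iv).
Proof.
  intros ci cii ciii civ.
  assert (i_ii : ci -> cii).
  { intros Hs a b. set (c := colon L a b).
    destruct (Hs c b a (colon_mul L a b)) as [b1 [b2 [H1 [H2 E]]]].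
    assert (Hb1 : le b1 c).
    { apply colon_ub. rewrite E. apply mul_mono_r, H2. }
    assert (Eb : b1 = c) by (apply le_antisym; assumption).
    subst b1.
    apply le_antisym.
    - assert (Hb2 : le b2 (colon L a c)).
      { apply colon_ub. rewrite mul_comm, <- E. apply le_refl. }
      replace (mul (colon L a c) c) with (mul c (colon L a c)) by apply mul_comm.
      eapply le_trans; [rewrite E at 1; apply le_refl|]. apply mul_mono_r, Hb2.
    - apply colon_mul. }
  assert (ii_iii : cii -> ciii).
  { intros H a b. exists (colon L a (colon L a b)). rewrite mul_comm. apply H. }
  assert (iii_i : ciii -> ci).
  { intros H a1 a2 b Hab. set (b1 := colon L b a2).
    destruct (H b a2) as [c Ec]. fold b1 in Ec.
    exists b1, (colon L b b1). split; [|split].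
    - apply colon_ub. exact Hab.
    - apply colon_ub. rewrite mul_comm. apply colon_mul.
    - apply le_antisym.
      + rewrite Ec at 1. apply mul_mono_r. apply colon_ub.
        rewrite mul_comm, <- Ec. apply le_refl.
      + rewrite mul_comm. apply colon_mul. }
  assert (iii_iv : ciii -> civ) by (intros H a b _ _ _ _; apply H).
  assert (iv_iii : civ -> ciii).
  { intros H a b.
    set (j := sup (fun t => t = a \/ t = b)).
    assert (Ecol : colon L a b = colon L a j).
    { apply le_antisym.
      - apply colon_ub. unfold j. rewrite mul_sup_distr. apply sup_least.
        intros y [t [[-> | ->] ->]]. apply mul_le_l. apply colon_mul.
      - apply colon_ub. eapply le_trans; [|apply (colon_mul L a j)].
        apply mul_mono_r. unfold j. apply sup_ub. auto. }
    assert (Haj : le a j) by (unfold j; apply sup_ub; auto).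
    rewrite Ecol. clear Ecol. clearbody j. clear b. rename j into b. rename Haj into Hab.
    destruct (classic (a = b)) as [Eab | Nab].
    { subst b. exists a. symmetry. apply le_antisym. apply mul_le_l.
      rewrite <- (mul_top_l _ a) at 1. apply mul_mono_l. apply colon_ub. rewrite mul_top_l. apply le_refl. }
    destruct (classic (b = top)) as [Eb | Nb].
    { subst b. exists top. assert (E : colon L a top = a).
      { apply le_antisym.
        - eapply le_trans; [|apply (colon_mul L a top)].
          rewrite mul_comm, mul_top_l. apply le_refl.
        - apply colon_ub. rewrite mul_comm, mul_top_l. apply le_refl. }
      rewrite E, mul_comm, mul_top_l. reflexivity. }
    destruct (classic (a = bot)) as [Ea | Na].
    { subst a. exists bot. rewrite mul_bot. reflexivity. }
    destruct (classic (prime_elt L a)) as [Pa | NPa].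
    { exists top. rewrite mul_comm, mul_top_l.
      apply le_antisym.
      - apply colon_ub. apply mul_le_r.
      - destruct Pa as [_ Pa]. destruct (Pa _ _ (colon_mul L a b)) as [h | h].
        exact h. exfalso. apply Nab. apply le_antisym; assumption. }
    apply H.
    - split. apply bot_least. intro e. apply Na. auto.
    - split; assumption.
    - split. apply top_greatest. exact Nb.
    - exact NPa. }
  tauto.
Qed.
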